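(* Let $A \in SL(2,\mathbb{Z})$. Then for every $k \geq 1$ there is an integer $1 \leq d \leq 6^k$ such that \[ I + A + A^2 + \cdots + A^{d-1} \equiv 0 \mod 3^k, \] where $I$ is the identity matrix and the congruence is entrywise. *)

(* Defs.v *)
From mathcomp Require Import all_boot all_order all_algebra.
Set Implicit Arguments. Unset Strict Implicit. Unset Printing Implicit Defensive.
Import GRing.Theory Num.Theory.
Local Open Scope ring_scope.

Definition SL2Z (A : 'M[int]_2) : Prop := \det A = 1.

Definition mx_cong0 (m : int) (B : 'M[int]_2) : Prop :=
  forall i j : 'I_2, (m %| B i j)%Z.

(* Main.v *)
Require Import Defs.
From mathcomp Require Import all_boot all_order all_algebra.
From mathcomp Require Import ring zify.
Import GRing.Theory Num.Theory.
Local Open Scope ring_scope.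

Lemma det2 (A : 'M[int]_2) : \det A = A 0 0 * A 1 1 - A 0 1 * A 1 0.
Proof.
rewrite (expand_det_row _ 0) !big_ord_recr big_ord0 /= add0r.
rewrite /cofactor !det_mx11 !mxE /=.
have e0 : widen_ord (m:=2) (leqnSn 1) ord_max = 0 by apply/val_inj.
have e1 : lift 0 (0 : 'I_1) = 1 :> 'I_2 by apply/val_inj.
have e2 : ord_max = 1 :> 'I_2 by apply/val_inj.
have e3 : lift 1 (0 : 'I_1) = 0 :> 'I_2 by apply/val_inj.
rewrite e0 e1 e2 e3 expr0 expr1. ring.
Qed.

Definition chi (t : int) : {poly int} := 'X^2 - t%:P * 'X + 1.
Definition sp (d : nat) : {poly int} := \sum_(i < d) 'X^i.
Definition inI (t : int) (k : nat) (p : {poly int}) :=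
  exists c g, p = 3%:P ^+ k * c + chi t * g.

Lemma sp_add a b : sp (a + b) = sp a + 'X^a * sp b.
Proof.
rewrite /sp big_split_ord /= mulr_sumr; congr (_ + _).
by apply: eq_bigr => i _; rewrite exprD.
Qed.

Lemma sp_tel d : ('X - 1) * sp d = 'X^d - 1.
Proof.
elim: d => [|d IH]; first by rewrite /sp big_ord0 mulr0 expr0 subrr.
rewrite -addn1 sp_add mulrDr IH /sp big_ord1 expr0 mulr1 exprD expr1; ring.
Qed.

Lemma step t k d : (1 <= k)%N -> inI t k (sp d) -> inI t k.+1 (sp (3 * d)).
Proof.
case: k => [//|k] _ [c [g hs]].
have hx : 'X^d = 1 + ('X - 1) * (3%:P ^+ k.+1 * c + chi t * g).
  by rewrite -hs sp_tel; ring.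
have -> : (3 * d = d + (d + d))%N by lia.
rewrite !sp_add hs hx !(exprS (3%:P)).
set u := 3%:P ^+ k; set x := chi t.
pose c1 := ('X - 1) * c; pose g1 := ('X - 1) * g.
pose e := 1 + 3%:P * u * c1 + 3%:P * u * u * c1 * c1.
pose h := 3%:P * g1 + 6%:P * u * c1 * g1 + x * g1 * g1.
exists (c * e), (g * (3%:P * e + x * h) + 3%:P * u * c * h).
rewrite /e /h /c1 /g1 /u /x !(exprS (3%:P)); ring.
Qed.

Lemma sp3 : sp 3 = 1 + 'X + 'X^2.
Proof. by rewrite /sp !big_ord_recr big_ord0 /= add0r expr0 expr1. Qed.

Lemma base t : exists d, [/\ (1 <= d)%N, (d <= 6)%N & inI t 1 (sp d)].
Proof.
have ht := divz_eq t 3.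
set q := (t %/ 3)%Z in ht; set r := (t %% 3)%Z in ht.
have r0 : 0 <= r by apply: modz_ge0.
have r3 : r < 3 by apply: ltz_pmod.
have [hr|[hr|hr]] : r = 0 \/ r = 1 \/ r = 2 by lia.
all: rewrite hr in ht; clearbody q r.
- exists 4%N; split => //.
  have -> : (4 = 3 + 1)%N by [].
  rewrite sp_add sp3 /sp big_ord1 /chi ht.
  exists (q%:P * 'X * (1 + 'X)), (1 + 'X). rewrite /chi ?rmorphD ?rmorphM /=. ring.
- exists 6%N; split => //.
  have -> : (6 = 3 + 3)%N by [].
  rewrite sp_add sp3 /chi ht.
  exists (q%:P * (3 * q + 2)%:P * 'X^2 * ('X + 1)).
  exists (('X + 1) * ('X^2 - t%:P * 'X + 1 + 3%:P * q%:P * 'X) + (t + 1)%:P * 'X * ('X + 1)).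
  rewrite /chi ht ?rmorphD ?rmorphM /=. ring.
- exists 3%N; split => //.
  rewrite sp3 /chi ht.
  exists ((q + 1)%:P * 'X), 1. rewrite /chi ?rmorphD ?rmorphM /=. ring.
Qed.

Lemma allk t k : (1 <= k)%N -> exists d, [/\ (1 <= d)%N, (d <= 2 * 3 ^ k)%N & inI t k (sp d)].
Proof.
elim: k => [//|k IH] _.
case: k IH => [|k] IH.
  by have [d [? ? ?]] := base t; exists d; split.
have [d [d1 d2 hd]] := IH isT.
exists (3 * d)%N; split; first by lia.
  by rewrite expnS; lia.
by apply: step.
Qed.

Lemma CH (A : 'M[int]_2) : \det A = 1 -> horner_mx A (chi (A 0 0 + A 1 1)) = 0.
Proof.
rewrite det2 => hd.
rewrite /chi rmorphD rmorphB !rmorphM rmorph1 /= horner_mx_C horner_mx_X.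
change (A *m A - (A 0 0 + A 1 1)%:M *m A + 1%:M = 0 :> 'M_2).
have o2 : forall i : 'I_2, i = 0 \/ i = 1.
  by case=> [[|[|//]]] Hi; [left|right]; apply/val_inj.
apply/matrixP => i j; rewrite !mxE !big_ord_recr !big_ord0 /= !mxE ?big_ord_recr ?big_ord0 /= ?mxE.
have e0 : widen_ord (m:=2) (leqnSn 1) ord_max = 0 by apply/val_inj.
have e2 : ord_max = 1 :> 'I_2 by apply/val_inj.
rewrite e0 e2.
case: (o2 i) => ->; case: (o2 j) => -> /=; rewrite ?mulr1n ?mulr0n; lia.
Qed.

Theorem lemma5p30 (A : 'M[int]_2) (hA : SL2Z A) (k : nat) (hk : (1 <= k)%N) :
  exists d : nat, [/\ (1 <= d)%N, (d <= 6 ^ k)%N &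
    mx_cong0 (3 ^ k)%:Z (\sum_(i < d) A ^+ i)].
Proof.
have [d [d1 d2 [c [g hs]]]] := allk (A 0 0 + A 1 1) k hk.
exists d; split => //.
  apply: (leq_trans d2); case: k hk {d2 hs} => [//|k] _.
  rewrite -[6%N]/(2 * 3)%N expnMn (expnS 2); have := expn_gt0 2 k; have := expn_gt0 3 k.+1; nia.
have hS : \sum_(i < d) A ^+ i = horner_mx A (sp d).
  rewrite /sp rmorph_sum; apply: eq_bigr => i _.
  by rewrite rmorphXn /= horner_mx_X.
move=> i j; rewrite hS hs rmorphD !rmorphM /= CH // mul0r addr0.
rewrite rmorphXn /= horner_mx_C.
have -> : (3 ^ k)%:Z = 3 ^+ k by rewrite -natz natrX.
have -> : (3%:M : 'M[int]_2) ^+ k = (3 ^+ k)%:M by rewrite -rmorphXn.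
rewrite -mulmxE mul_scalar_mx mxE.
exact: dvdz_mulr.
Qed.
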